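(* Let $\varphi:G\to T$ be a hyperelliptic morphism of weighted graphs, where $G$ has genus $g$. Then the ramification divisor of $\varphi$ is $$\mathrm{Ram}\,\varphi=\sum_{v\in V(G),\ d_\varphi(v)=2}\big[2g(v)+2-\mathrm{val}_{C_\varphi}(v)\big]\,v .$$ If $G$ and $T$ have no legs, then $\deg\mathrm{Ram}\,\varphi=2g+2$.
   Context: Graphs with legs, weighted graphs, $T_vG$, $\mathrm{val}(v)$, $\chi(v)=2-2g(v)-\mathrm{val}(v)$, and harmonic morphisms $\varphi:G\to T$ with degree function $d_\varphi$ on vertices and half-edges are as usual (a map on vertices and half-edges commuting with root and involution maps, with $d_\varphi(v)=\sum_{h'\in T_vG,\varphi(h')=h}d_\varphi(h')$ for every $h\in T_{\varphi(v)}T$); finite means $d_\varphi>0$ on all half-edges. The ramification degree at $v$ is $\mathrm{Ram}_\varphi(v)=d_\varphi(v)\chi(\varphi(v))-\chi(v)$ and $\mathrm{Ram}\,\varphi=\sum_v\mathrm{Ram}_\varphi(v)v$. A hyperelliptic morphism is a finite harmonic morphism $\varphi:G\to T$ of degree $2$ onto a weighted graph $T$ of genus $0$ such that $d_\varphi(v)=2$ for every vertex $v$ of $G$ with $g(v)>0$. The dilation subgraph $C_\varphi$ consists of the vertices and half-edges of $G$ on which $d_\varphi=2$ (equivalently, of $T$ having exactly one preimage); $\mathrm{val}_{C_\varphi}(v)$ is the number of half-edges rooted at $v$ on which $d_\varphi=2$. *)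

(* Defs.v *)
From mathcomp Require Import all_boot all_order all_algebra.
Set Implicit Arguments. Unset Strict Implicit. Unset Printing Implicit Defensive.
Import Order.TTheory GRing.Theory Num.Theory.

(* A weighted graph with legs: finite vertex set, finite half-edge set,
   root map, involution on half-edges (fixed points = legs), vertex genus. *)
Record wgraph := WGraph {
  gV : finType;
  gH : finType;
  groot : gH -> gV;
  giota : gH -> gH;
  giotaK : involutive giota;
  gwt : gV -> nat }.

Section Defs.
Variable G : wgraph.

Definition gadj : rel (gV G) :=
  fun u w => [exists h, (groot h == u) && (groot (giota h) == w)].

Definition gconnected : Prop :=
  0 < #|gV G| /\ forall u w : gV G, connect gadj u w.

Definition legs : {set gH G} := [set h : gH G | giota h == h].
Definition noLegs : Prop := legs = set0.

Definition nedges : nat := #|[set h : gH G | giota h != h]| %/ 2.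

(* genus of a (connected) weighted graph: first Betti number + sum of weights *)
Definition genus : int :=
  (nedges%:Z - #|gV G|%:Z + 1 + (\sum_(v : gV G) gwt v)%:Z)%R.

Definition val (v : gV G) : nat := #|[set h : gH G | groot h == v]|.

Definition chi (v : gV G) : int := (2 - 2 * (gwt v)%:Z - (val v)%:Z)%R.
End Defs.

Section Morph.
Variables (G T : wgraph).
Variables (fV : gV G -> gV T) (fH : gH G -> gH T)
          (dV : gV G -> nat) (dH : gH G -> nat).

Definition harmonic : Prop :=
  [/\ (forall h, fV (groot h) = groot (fH h)),
      (forall h, fH (giota h) = giota (fH h)),
      (forall h, dH (giota h) = dH h) &
      (forall (v : gV G) (h : gH T), groot h = fV v ->
          dV v = \sum_(h' : gH G | (groot h' == v) && (fH h' == h)) dH h')].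

Definition finite_morph : Prop := forall h, 0 < dH h.

Definition has_degree (n : nat) : Prop :=
  forall w : gV T, \sum_(v : gV G | fV v == w) dV v = n.

Definition hyperelliptic : Prop :=
  [/\ harmonic, finite_morph, has_degree 2, genus T = 0%R &
      forall v : gV G, 0 < gwt v -> dV v = 2].

Definition Ram (v : gV G) : int := ((dV v)%:Z * chi (fV v) - chi v)%R.

(* number of half-edges at v in the dilation subgraph C_phi *)
Definition valC (v : gV G) : nat := #|[set h : gH G | (groot h == v) && (dH h == 2)]|.
End Morph.

(* Main.v *)
Require Import Defs.
From mathcomp Require Import all_boot all_order all_algebra.
From mathcomp Require Import zify.
Set Implicit Arguments. Unset Strict Implicit. Unset Printing Implicit Defensive.
Import Order.TTheory GRing.Theory Num.Theory.
Local Open Scope ring_scope.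

Lemma Posz_sum (I : finType) (P : pred I) (F : I -> nat) :
  ((\sum_(i | P i) F i)%N)%:Z = (\sum_(i | P i) (F i)%:Z)%R.
Proof. by apply: (big_morph Posz PoszD). Qed.

Lemma inv_imset (H : finType) (i : H -> H) (ik : involutive i) (D : {set H}) h :
  (h \in i @: D) = (i h \in D).
Proof.
apply/imsetP/idP => [[x xD ->]|hD]; first by rewrite ik.
by exists (i h); rewrite ?ik.
Qed.

Lemma card_pair (H : finType) (i : H -> H) (ik : involutive i) (D : {set H}) :
  [disjoint D & i @: D] -> #|D :|: i @: D| = (2 * #|D|)%N.
Proof.
move=> dis; rewrite cardsU (disjoint_setI0 dis) cards0 (card_imset _ (inv_inj ik)).
lia.
Qed.

Fixpoint reach (G : wgraph) (r : gV G) (n : nat) : {set gV G} :=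
  if n is k.+1 then reach r k :|: [set u | [exists x in reach r k, gadj u x]]
  else [set r].

Lemma reach_path G r p u : path (@gadj G) u p -> last u p = r -> u \in reach r (size p).
Proof.
elim: p u => [|x p IH] u /=; first by move=> _ ->; rewrite set11.
case/andP=> ux px lx; rewrite in_setU; apply/orP; right; rewrite inE.
by apply/existsP; exists x; rewrite IH.
Qed.

Lemma reach_mono G r m n : (m <= n)%N -> reach r m \subset @reach G r n.
Proof.
elim: n => [|n IH]; first by rewrite leqn0 => /eqP ->.
rewrite leq_eqVlt => /orP[/eqP->//|]; rewrite ltnS => /IH /subset_trans; apply.
exact: subsetUl.
Qed.

Lemma betti_ge0 (G : wgraph) : gconnected G -> (#|gV G| <= (nedges G).+1)%N.
Proof.
case=> Vn Hc.
have [r _] : {r : gV G | true}.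
  case: (pickP (@predT (gV G))) => [r _|e]; first by exists r.
  by move: Vn; rewrite (eq_card0 e).
have ex u : exists n, u \in reach r n.
  by case/connectP: (Hc u r) => p pp lp; exists (size p); apply: reach_path.
pose d u := ex_minn (ex u).
have dP u : u \in reach r (d u) /\ forall n, u \in reach r n -> (d u <= n)%N.
  by rewrite /d; case: ex_minnP.
have down u : u != r -> exists h, (groot h == u) && (d (groot (giota h)) < d u)%N.
  move=> ur; case: (dP u); case E: (d u) => [|k] ur0 umin.
    by move: ur0 => /=; rewrite inE (negbTE ur).
  move: ur0; rewrite /= in_setU => /orP[/umin|]; first by rewrite ltnn.
  rewrite inE => /existsP [x /andP [xk /existsP [h /andP [hu hx]]]].
  exists h; rewrite hu (eqP hx) /=; apply: leq_ltn_trans (ltnSn k).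
  by case: (dP x) => _; apply.
pose D := [set h | (d (groot (giota h)) < d (groot h))%N].
have dis : [disjoint D & (@giota G) @: D].
  rewrite -setI_eq0; apply/eqP/setP => h; rewrite !inE inv_imset ?inE; last exact: giotaK.
  rewrite giotaK; apply/negP => /andP [a b]; lia.
have sub : D :|: (@giota G) @: D \subset [set h | giota h != h].
  apply/subsetP => h; rewrite in_setU inv_imset ?inE; last exact: giotaK.
  rewrite giotaK; case/orP => H; apply/eqP => E; move: H; rewrite ?E ltnn //.
have c1 := subset_leq_card sub; rewrite (card_pair (@giotaK G) dis) in c1.
have c2 : (#|gV G|.-1 <= #|D|)%N.
  rewrite -(cardsC1 r); apply: leq_trans (leq_imset_card (@groot G) D).
  apply/subset_leq_card/subsetP => u; rewrite !inE => /down [h /andP [hu hd]].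
  by apply/imsetP; exists h; rewrite ?inE ?(eqP hu).
rewrite /nedges; lia.
Qed.

Lemma wt0 (T : wgraph) : gconnected T -> genus T = 0 -> forall w : gV T, gwt w = 0%N.
Proof.
move=> /betti_ge0 b; rewrite /genus => g0 w.
have : (gwt w <= \sum_(v : gV T) gwt v)%N.
  by rewrite (bigD1 w) //= leq_addr.
lia.
Qed.

Lemma sum_val (G : wgraph) : (\sum_(v : gV G) Defs.val v)%N = #|gH G|.
Proof.
rewrite -sum1_card (partition_big (@groot G) predT) //=.
apply: eq_bigr => v _; rewrite /Defs.val -sum1_card; apply: eq_bigl => h; rewrite inE.
by [].
Qed.

Lemma even_H (G : wgraph) : noLegs G -> #|gH G| = (2 * nedges G)%N.
Proof.
move=> nl.
pose D := [set h : gH G | (enum_rank h < enum_rank (giota h))%N].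
have dis : [disjoint D & (@giota G) @: D].
  rewrite -setI_eq0; apply/eqP/setP => h; rewrite !inE inv_imset ?inE; last exact: giotaK.
  rewrite giotaK; apply/negP => /andP [a b]; lia.
have eU : D :|: (@giota G) @: D = [set: gH G].
  apply/setP => h; rewrite in_setU inv_imset ?inE; last exact: giotaK.
  rewrite giotaK -neq_ltn; apply/negP => /eqP E; have {}E := enum_rank_inj (ord_inj E).
  have : h \in legs G by rewrite inE -E.
  by rewrite /noLegs in nl; rewrite nl inE.
have c := card_pair (@giotaK G) dis; rewrite eU cardsT in c.
rewrite /nedges.
have -> : [set h : gH G | giota h != h] = [set: gH G].
  apply/setP => h; rewrite !inE; apply/negP => /eqP E.
  have : h \in legs G by rewrite inE E.
  by rewrite /noLegs in nl; rewrite nl inE.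
rewrite cardsT c; lia.
Qed.

Lemma sum_chi (G : wgraph) : noLegs G -> (\sum_(v : gV G) chi v = 2 - 2 * genus G)%R.
Proof.
move=> nl; rewrite /chi /genus !sumrB sumr_const -mulr_sumr -!Posz_sum sum_val even_H //.
rewrite -mulr_natr natz. rewrite [#|_| in LHS](_ : _ = #|gV G|) //. lia.
Qed.

Lemma sum_dH (G T : wgraph) (fV : gV G -> gV T) (fH : gH G -> gH T)
  (dV : gV G -> nat) (dH : gH G -> nat) :
  harmonic fV fH dV dH -> forall v,
  (\sum_(h' | groot h' == v) dH h')%N = (dV v * Defs.val (fV v))%N.
Proof.
case=> hr _ _ hs v.
rewrite (partition_big fH (fun h => groot h == fV v)); last first.
  by move=> h' /eqP <-; rewrite hr.
transitivity (\sum_(h | groot h == fV v) dV v)%N.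
  by apply: eq_bigr => h /eqP /(hs v) ->.
rewrite sum_nat_const mulnC; congr (_ * _)%N; apply: eq_card => h; rewrite inE //.
Qed.

Lemma dH_le (G T : wgraph) (fV : gV G -> gV T) (fH : gH G -> gH T)
  (dV : gV G -> nat) (dH : gH G -> nat) :
  harmonic fV fH dV dH -> forall h', (dH h' <= dV (groot h'))%N.
Proof.
case=> hr _ _ hs h'; rewrite (hs (groot h') (fH h')) ?hr //.
by rewrite (bigD1 h') ?eqxx //= leq_addr.
Qed.

Unset Implicit Arguments.

Theorem proposition5p13 (G T : wgraph)
  (fV : gV G -> gV T) (fH : gH G -> gH T)
  (dV : gV G -> nat) (dH : gH G -> nat) :
  gconnected G -> gconnected T ->
  hyperelliptic fV fH dV dH ->
  (forall v : gV G,
     Ram fV dV v =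
     (if dV v == 2%N then 2 * (gwt v)%:Z + 2 - (valC dH v)%:Z else 0)%R) /\
  (noLegs G -> noLegs T ->
     (\sum_(v : gV G) Ram fV dV v)%R = (2 * genus G + 2)%R).
Proof.
move=> cG cT [hm fin deg gT wpos].
have w0 := wt0 cT gT.
have sdH := sum_dH hm; have dle := dH_le hm.
split.
  move=> v; rewrite /Ram /chi w0.
  have vle2 : (dV v <= 2)%N by rewrite -(deg (fV v)) (bigD1 v) //= leq_addr.
  case: eqP => [d2|dn2].
    have e : (\sum_(h' | groot h' == v) dH h' = Defs.val v + valC dH v)%N.
      transitivity (\sum_(h' | groot h' == v) (1 + (dH h' == 2%N)))%N.
        apply: eq_bigr => h /eqP hv; have := fin h; have := dle h; rewrite hv d2.
        by case: (dH h) => [|[|[|]]].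
      rewrite big_split /= sum1_card.
      rewrite [X in (_ + X)%N](_ : _ = \sum_(h' | (groot h' == v) && (dH h' == 2%N)) 1)%N.
        by rewrite sum1_card; congr (_ + _)%N; apply: eq_card => h; rewrite inE.
      by rewrite big_mkcondr; apply: eq_bigr => h _; case: eqP.
    have := sdH v; rewrite e d2 => e2; lia.
  have gv0 : gwt v = 0%N.
    by case: (posnP (gwt v)) => // /wpos.
  have d1 : dV v = 1%N.
    case E: (dV v) => [|[|k]] //; last by lia.
    exfalso.
    case: (pickP (fun u => (fV u == fV v) && (dV u != 0%N))) => [u /andP [fu du] | none]; last first.
      have := deg (fV v); rewrite big1 // => u fu; move: (none u); rewrite fu /=.
      by move/negbFE/eqP.
    case: cG => _ /(_ v u) /connectP [[|x p]] /= pp lp.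
      by move: du; rewrite lp E.
    case/andP: pp => /existsP [h /andP [/eqP hv _]] _.
    by have := dle h; have := fin h; rewrite hv E; lia.
  have e : (\sum_(h' | groot h' == v) dH h' = Defs.val v)%N.
    transitivity (\sum_(h' | groot h' == v) 1)%N.
      apply: eq_bigr => h /eqP hv; have := fin h; have := dle h; rewrite hv d1.
      by case: (dH h) => [|[|]].
    by rewrite sum1_card; apply: eq_card => h; rewrite inE.
  have := sdH v; rewrite e d1 => e2; lia.
move=> nlG nlT.
rewrite /Ram sumrB sum_chi //.
rewrite (partition_big fV predT) //=.
transitivity (\sum_(w : gV T) 2 * chi w - (2 - 2 * genus G))%R; last first.
  by rewrite -mulr_sumr sum_chi // gT; lia.
congr (_ - _)%R; apply: eq_bigr => w _.
transitivity (\sum_(i | fV i == w) (dV i)%:Z * chi w)%R.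
  by apply: eq_bigr => i /eqP ->.
by rewrite -mulr_suml -Posz_sum deg.
Qed.
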